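(* Let $\mathbf A$ be a complete residuated lattice and $I$, $J$ arbitrary sets. (i) A mapping $\phi\colon A^I\to A^J$ is a $\phi$-type mapping if and only if there is a fuzzy relation $R\colon I\times J\to A$ with $\phi=\phi_R$; a mapping $\rho\colon A^J\to A^I$ is a $\rho$-type mapping if and only if there is a fuzzy relation $R\colon I\times J\to A$ with $\rho=\rho_R$. Moreover, a $\phi$-type mapping $\phi$ and a $\rho$-type mapping $\rho$ form a Galois connection between $A^I$ and $A^J$ if and only if there is a single fuzzy relation $R$ with $\phi=\phi_R$ and $\rho=\rho_R$. (ii) A mapping $\delta\colon A^I\to A^J$ is a $\delta$-type mapping if and only if $\delta=\delta_R$ for some fuzzy relation $R\colon I\times J\to A$; a mapping $\epsilon\colon A^J\to A^I$ is a $\delta$-type mapping if and only if $\epsilon=\epsilon_R$ for some fuzzy relation $R\colon I\times J\to A$. Moreover, $\delta$-type mappings $\delta\colon A^I\to A^J$ and $\epsilon\colon A^J\to A^I$ form a reversed Galois connection if and only if there is a single fuzzy relation $R$ with $\delta=\delta_R$ and $\epsilon=\epsilon_R$.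
   Context: A residuated lattice is an algebra $\mathbf A=(A;\vee,\wedge,\cdot,\rightarrow,0,1)$ such that $(A;\vee,\wedge,0,1)$ is a bounded lattice, $(A;\cdot,1)$ is a commutative monoid, and $x\cdot y\le z$ iff $x\le y\rightarrow z$; complete if the lattice reduct is complete. $A^K$ carries componentwise operations and order; $d^K$ is the constant element with value $d\in A$. A fuzzy relation is a map $R\colon I\times J\to A$. Operators: $\phi_R(x)(j)=\bigwedge_{i\in I}(R(i,j)\rightarrow x(i))$ ($A^I\to A^J$); $\rho_R(y)(i)=\bigvee_{j\in J}(R(i,j)\cdot y(j))$ ($A^J\to A^I$); $\delta_R(x)(j)=\bigwedge_{i\in I}(x(i)\rightarrow R(i,j))$ ($A^I\to A^J$); $\epsilon_R(y)(i)=\bigwedge_{j\in J}(y(j)\rightarrow R(i,j))$ ($A^J\to A^I$). Galois connection: monotone $\phi,\rho$ with $y\le\phi(x)$ iff $\rho(y)\le x$. Reversed Galois connection: antitone $\delta,\epsilon$ with $y\le\delta(x)$ iff $x\le\epsilon(y)$. For sets $K,L$: $\phi\colon A^K\to A^L$ is $\phi$-type if infima preserving ($\phi(\bigwedge M)=\bigwedge\phi(M)$ for all $M$) and $d^L\rightarrow\phi(x)=\phi(d^K\rightarrow x)$ for all $d\in A$; $\rho\colon A^L\to A^K$ is $\rho$-type if suprema preserving and $d^K\cdot\rho(x)=\rho(d^L\cdot x)$ for all $d$; $\delta\colon A^K\to A^L$ is $\delta$-type if suprema reversing ($\delta(\bigvee M)=\bigwedge\delta(M)$) and $d^L\rightarrow\delta(x)=\delta(d^K\cdot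 x)$ for all $d$. *)

(* Defs.v *)
Record CRL := {
  carrier :> Type;
  le : carrier -> carrier -> Prop;
  join : carrier -> carrier -> carrier;
  meet : carrier -> carrier -> carrier;
  mul : carrier -> carrier -> carrier;
  imp : carrier -> carrier -> carrier;
  zero : carrier;
  one : carrier;
  sup : (carrier -> Prop) -> carrier;
  inf : (carrier -> Prop) -> carrier;
  le_refl : forall x, le x x;
  le_antisym : forall x y, le x y -> le y x -> x = y;
  le_trans : forall x y z, le x y -> le y z -> le x z;
  join_ub_l : forall x y, le x (join x y);
  join_ub_r : forall x y, le y (join x y);
  join_lub : forall x y z, le x z -> le y z -> le (join x y) z;
  meet_lb_l : forall x y, le (meet x y) x;
  meet_lb_r : forall x y, le (meet x y) y;
  meet_glb : forall x y z, le z x -> le z y -> le z (meet x y);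
  zero_bot : forall x, le zero x;
  one_top : forall x, le x one;
  sup_ub : forall (S : carrier -> Prop) x, S x -> le x (sup S);
  sup_lub : forall (S : carrier -> Prop) z, (forall x, S x -> le x z) -> le (sup S) z;
  inf_lb : forall (S : carrier -> Prop) x, S x -> le (inf S) x;
  inf_glb : forall (S : carrier -> Prop) z, (forall x, S x -> le z x) -> le z (inf S);
  mul_assoc : forall x y z, mul x (mul y z) = mul (mul x y) z;
  mul_comm : forall x y, mul x y = mul y x;
  mul_one : forall x, mul x one = x;
  residuation : forall x y z, le (mul x y) z <-> le x (imp y z)
}.

Arguments le {_}. Arguments mul {_}. Arguments imp {_}.
Arguments sup {_}. Arguments inf {_}.

Section Ops.
Variable A : CRL.

Definition iinf {I : Type} (f : I -> A) : A := inf (fun a => exists i, a = f i).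
Definition isup {I : Type} (f : I -> A) : A := sup (fun a => exists i, a = f i).

Definition fle {K : Type} (x y : K -> A) : Prop := forall k, le (x k) (y k).

Definition finf {K : Type} (M : (K -> A) -> Prop) : K -> A :=
  fun k => inf (fun a => exists x, M x /\ a = x k).
Definition fsup {K : Type} (M : (K -> A) -> Prop) : K -> A :=
  fun k => sup (fun a => exists x, M x /\ a = x k).

Definition cst (K : Type) (d : A) : K -> A := fun _ => d.

Definition fimp {K : Type} (x y : K -> A) : K -> A := fun k => imp (x k) (y k).
Definition fmul {K : Type} (x y : K -> A) : K -> A := fun k => mul (x k) (y k).

Definition phiR {I J : Type} (R : I -> J -> A) (x : I -> A) : J -> A :=
  fun j => iinf (fun i => imp (R i j) (x i)).
Definition rhoR {I J : Type} (R : I -> J -> A) (y : J -> A) : I -> A :=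
  fun i => isup (fun j => mul (R i j) (y j)).
Definition deltaR {I J : Type} (R : I -> J -> A) (x : I -> A) : J -> A :=
  fun j => iinf (fun i => imp (x i) (R i j)).
Definition epsR {I J : Type} (R : I -> J -> A) (y : J -> A) : I -> A :=
  fun i => iinf (fun j => imp (y j) (R i j)).

Definition feq {K L : Type} (f g : (K -> A) -> (L -> A)) : Prop :=
  forall x l, f x l = g x l.

Definition phi_type {K L : Type} (phi : (K -> A) -> (L -> A)) : Prop :=
  (forall M : (K -> A) -> Prop,
      phi (finf M) = finf (fun y => exists x, M x /\ y = phi x)) /\
  (forall (d : A) (x : K -> A), fimp (cst L d) (phi x) = phi (fimp (cst K d) x)).

Definition rho_type {K L : Type} (rho : (L -> A) -> (K -> A)) : Prop :=
  (forall M : (L -> A) -> Prop,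
      rho (fsup M) = fsup (fun y => exists x, M x /\ y = rho x)) /\
  (forall (d : A) (x : L -> A), fmul (cst K d) (rho x) = rho (fmul (cst L d) x)).

Definition delta_type {K L : Type} (delta : (K -> A) -> (L -> A)) : Prop :=
  (forall M : (K -> A) -> Prop,
      delta (fsup M) = finf (fun y => exists x, M x /\ y = delta x)) /\
  (forall (d : A) (x : K -> A), fimp (cst L d) (delta x) = delta (fmul (cst K d) x)).

Definition galois {I J : Type} (phi : (I -> A) -> (J -> A)) (rho : (J -> A) -> (I -> A)) : Prop :=
  (forall x1 x2, fle x1 x2 -> fle (phi x1) (phi x2)) /\
  (forall y1 y2, fle y1 y2 -> fle (rho y1) (rho y2)) /\
  (forall x y, fle y (phi x) <-> fle (rho y) x).

Definition rgalois {I J : Type} (delta : (I -> A) -> (J -> A)) (eps : (J -> A) -> (I -> A)) : Prop :=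
  (forall x1 x2, fle x1 x2 -> fle (delta x2) (delta x1)) /\
  (forall y1 y2, fle y1 y2 -> fle (eps y2) (eps y1)) /\
  (forall x y, fle y (delta x) <-> fle x (eps y)).

End Ops.

(* Main.v *)
Require Import Defs.
From Stdlib Require Import FunctionalExtensionality.

Section S.
Variable A : CRL.
Local Infix "⊑" := (@le A) (at level 70).
Local Infix "⊗" := (@mul A) (at level 40, left associativity).
Local Infix "⇒" := (@imp A) (at level 55, right associativity).

Lemma ltr (x y z : A) : x ⊑ y -> y ⊑ z -> x ⊑ z.
Proof. apply le_trans. Qed.
Lemma lrefl (x : A) : x ⊑ x.
Proof. apply le_refl. Qed.
Lemma res1 (x y z : A) : x ⊗ y ⊑ z -> x ⊑ y ⇒ z.
Proof. apply residuation. Qed.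
Lemma res2 (x y z : A) : x ⊑ y ⇒ z -> x ⊗ y ⊑ z.
Proof. apply residuation. Qed.
Lemma mcomm (x y : A) : x ⊗ y = y ⊗ x.
Proof. apply mul_comm. Qed.
Lemma massoc (x y z : A) : x ⊗ (y ⊗ z) = (x ⊗ y) ⊗ z.
Proof. apply mul_assoc. Qed.
Lemma mone (x : A) : x ⊗ one A = x.
Proof. apply mul_one. Qed.

Lemma mul_mono_l (a b c : A) : a ⊑ b -> a ⊗ c ⊑ b ⊗ c.
Proof. intros H. apply res2. eapply ltr. exact H. apply res1, lrefl. Qed.
Lemma mul_mono_r (a b c : A) : a ⊑ b -> c ⊗ a ⊑ c ⊗ b.
Proof. intros H. rewrite (mcomm c a), (mcomm c b). now apply mul_mono_l. Qed.
Lemma mp (a b : A) : (a ⇒ b) ⊗ a ⊑ b.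
Proof. apply res2, lrefl. Qed.
Lemma imp_mono_r (a b c : A) : b ⊑ c -> a ⇒ b ⊑ a ⇒ c.
Proof. intros H. apply res1. eapply ltr. apply mp. exact H. Qed.
Lemma imp_anti_l (a b c : A) : a ⊑ b -> b ⇒ c ⊑ a ⇒ c.
Proof. intros H. apply res1. eapply ltr. apply mul_mono_r. exact H. apply mp. Qed.
Lemma mul_le_r (a b : A) : a ⊗ b ⊑ b.
Proof. rewrite mcomm. eapply ltr. apply mul_mono_r, one_top. rewrite mone. apply lrefl. Qed.
Lemma imp_one (a b : A) : one A ⊑ a ⇒ b -> a ⊑ b.
Proof. intros H. apply res2 in H. rewrite mcomm, mone in H. exact H. Qed.
Lemma imp_curry (d a r : A) : d ⇒ (a ⇒ r) = (d ⊗ a) ⇒ r.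
Proof.
  apply le_antisym.
  - apply res1. rewrite massoc. apply res2, res2, lrefl.
  - apply res1, res1. rewrite <- massoc. apply res2, lrefl.
Qed.
Lemma swap3 (a b c : A) : (a ⊗ b) ⊗ c = (a ⊗ c) ⊗ b.
Proof. rewrite <- !massoc, (mcomm b c). reflexivity. Qed.
Lemma mul_perm (r d x : A) : r ⊗ (d ⊗ x) = d ⊗ (r ⊗ x).
Proof. rewrite !massoc, (mcomm r d). reflexivity. Qed.

Definition ev {K : Type} (k0 : K) : K -> A := fun k => sup (fun _ : A => k = k0).
Lemma ev_self {K} (k0 : K) : one A ⊑ ev k0 k0.
Proof. unfold ev. apply sup_ub. reflexivity. Qed.
Lemma ev_mul_le {K} (k0 k : K) (d z : A) : (k = k0 -> d ⊑ z) -> d ⊗ ev k0 k ⊑ z.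
Proof.
  intros H. rewrite mcomm. apply res2. unfold ev. apply sup_lub.
  intros a E. apply res1. eapply ltr. apply mul_le_r. now apply H.
Qed.

Lemma iinf_lb {I} (f : I -> A) i : iinf A f ⊑ f i.
Proof. apply inf_lb. now exists i. Qed.
Lemma iinf_glb {I} (f : I -> A) z : (forall i, z ⊑ f i) -> z ⊑ iinf A f.
Proof. intros H. apply inf_glb. intros a [i ->]. apply H. Qed.
Lemma isup_ub {I} (f : I -> A) i : f i ⊑ isup A f.
Proof. apply sup_ub. now exists i. Qed.
Lemma isup_lub {I} (f : I -> A) z : (forall i, f i ⊑ z) -> isup A f ⊑ z.
Proof. intros H. apply sup_lub. intros a [i ->]. apply H. Qed.

Lemma feq_eq {K L} (f g : (K -> A) -> (L -> A)) : feq A f g -> f = g.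
Proof. intros H. extensionality x. extensionality l. apply H. Qed.

Lemma decomp {L} (y : L -> A) :
  y = fsup A (fun z => exists l, z = fmul A (cst A L (y l)) (ev l)).
Proof.
  extensionality l'. unfold fsup. apply le_antisym.
  - apply ltr with (y l' ⊗ ev l' l').
    + apply ltr with (y l' ⊗ one A); [rewrite mone; apply lrefl|]. apply mul_mono_r, ev_self.
    + apply sup_ub. exists (fmul A (cst A L (y l')) (ev l')). split.
      * now exists l'.
      * reflexivity.
  - apply sup_lub. intros a [x [[l ->] ->]]. unfold fmul, cst.
    apply ev_mul_le. intros ->. apply lrefl.
Qed.

Lemma rho_rep {K L} (rho : (L -> A) -> (K -> A)) :
  rho_type A rho -> feq A rho (rhoR A (fun k l => rho (ev l) k)).
Proof.
  intros [Hs Hd] y k.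
  transitivity (rho (fsup A (fun z => exists l, z = fmul A (cst A L (y l)) (ev l))) k).
  { rewrite <- decomp. reflexivity. }
  rewrite Hs. unfold fsup, rhoR, isup. apply le_antisym.
  - apply sup_lub. intros a [w [[z [[l ->] ->]] ->]].
    rewrite <- Hd. unfold fmul, cst. rewrite mcomm.
    apply sup_ub. now exists l.
  - apply sup_lub. intros a [l ->].
    apply ltr with (rho (fmul A (cst A L (y l)) (ev l)) k).
    + rewrite <- Hd. unfold fmul, cst. rewrite mcomm. apply lrefl.
    + apply sup_ub. eexists. split.
      * eexists. split. exists l. reflexivity. reflexivity.
      * reflexivity.
Qed.

Lemma rhoR_type {K L} (R : K -> L -> A) : rho_type A (rhoR A R).
Proof.
  split.
  - intros M. extensionality i. unfold fsup. apply le_antisym.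
    + unfold rhoR at 1. apply isup_lub. intros j. rewrite mcomm. apply res2. apply sup_lub.
      intros a [x [Mx ->]]. apply res1. rewrite mcomm.
      apply ltr with (rhoR A R x i).
      * unfold rhoR. apply (isup_ub (fun j => R i j ⊗ x j)).
      * apply sup_ub. exists (rhoR A R x). split; [now exists x | reflexivity].
    + apply sup_lub. intros a [w [[x [Mx ->]] ->]].
      unfold rhoR at 1. apply isup_lub. intros j.
      apply ltr with (R i j ⊗ sup (fun a => exists x, M x /\ a = x j)).
      * apply mul_mono_r. apply sup_ub. now exists x.
      * unfold rhoR. apply (isup_ub (fun j => R i j ⊗ fsup A M j) j).
  - intros d x. extensionality i. unfold fmul, cst, rhoR. apply le_antisym.
    + rewrite mcomm. apply res2. apply isup_lub. intros j. apply res1.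
      rewrite <- massoc, (mcomm (x j) d).
      apply (isup_ub (fun j => R i j ⊗ (d ⊗ x j))).
    + apply isup_lub. intros j. rewrite mul_perm. apply mul_mono_r.
      apply (isup_ub (fun j => R i j ⊗ x j)).
Qed.


Lemma phi_rep {K L} (phi : (K -> A) -> (L -> A)) (rho : (L -> A) -> (K -> A)) :
  (forall x y, fle A y (phi x) <-> fle A (rho y) x) ->
  (forall d x, fimp A (cst A L d) (phi x) = phi (fimp A (cst A K d) x)) ->
  feq A phi (phiR A (fun k l => rho (ev l) k)).
Proof.
  intros G Hd x l. unfold phiR. apply le_antisym.
  - apply iinf_glb. intros k. apply res1.
    assert (H1 : fle A (ev l) (fimp A (cst A L (phi x l)) (phi x))).
    { intros l'. unfold fimp, cst. apply res1. rewrite mcomm.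
      apply ev_mul_le. intros ->. apply lrefl. }
    rewrite Hd in H1. apply G in H1. specialize (H1 k).
    unfold fimp, cst in H1. apply res2 in H1. rewrite mcomm. exact H1.
  - set (c := iinf A (fun k => rho (ev l) k ⇒ x k)).
    assert (H1 : fle A (rho (ev l)) (fimp A (cst A K c) x)).
    { intros k. unfold fimp, cst. apply res1. rewrite mcomm. apply res2.
      apply (iinf_lb (fun k => rho (ev l) k ⇒ x k)). }
    apply G in H1. rewrite <- Hd in H1. specialize (H1 l).
    unfold fimp, cst in H1. apply imp_one. eapply ltr. apply (ev_self l). exact H1.
Qed.

Lemma phi_mono {K L} (phi : (K -> A) -> (L -> A)) :
  (forall M : (K -> A) -> Prop,
      phi (finf A M) = finf A (fun y => exists x, M x /\ y = phi x)) ->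
  forall x1 x2, fle A x1 x2 -> fle A (phi x1) (phi x2).
Proof.
  intros Hs x1 x2 H.
  assert (E : finf A (fun x => x = x1 \/ x = x2) = x1).
  { extensionality k. unfold finf. apply le_antisym.
    - apply inf_lb. exists x1. split; [now left | reflexivity].
    - apply inf_glb. intros a [x [[->| ->] ->]]; [apply lrefl | apply H]. }
  rewrite <- E, Hs. intros l. unfold finf. apply inf_lb.
  exists (phi x2). split; [exists x2; split; [now right|reflexivity] | reflexivity].
Qed.

Lemma phi_type_rep {K L} (phi : (K -> A) -> (L -> A)) :
  phi_type A phi -> exists R, feq A phi (phiR A R).
Proof.
  intros [Hs Hd].
  set (rho := fun y : L -> A => finf A (fun x => fle A y (phi x))).
  eexists. apply (phi_rep phi rho); [|exact Hd].
  intros x y. split.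
  - intros H k. unfold rho, finf. apply inf_lb. now exists x.
  - intros H l. eapply ltr. 2: apply (phi_mono phi Hs _ _ H l).
    unfold rho. rewrite Hs. unfold finf. apply inf_glb.
    intros a [w [[z [Hz ->]] ->]]. apply Hz.
Qed.

Lemma phiR_type {K L} (R : K -> L -> A) : phi_type A (phiR A R).
Proof.
  split.
  - intros M. extensionality l. unfold finf. apply le_antisym.
    + apply inf_glb. intros a [w [[x [Mx ->]] ->]].
      unfold phiR. apply iinf_glb. intros k.
      eapply ltr. apply (iinf_lb _ k). apply imp_mono_r.
      apply inf_lb. now exists x.
    + unfold phiR at 1. apply iinf_glb. intros k. apply res1. apply inf_glb.
      intros a [x [Mx ->]]. apply res2.
      eapply ltr.
      * apply inf_lb. exists (phiR A R x). split; [now exists x | reflexivity].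
      * unfold phiR. apply (iinf_lb (fun k => R k l ⇒ x k)).
  - intros d x. extensionality l. unfold fimp, cst, phiR. apply le_antisym.
    + apply iinf_glb. intros k. eapply ltr.
      * apply imp_mono_r. apply (iinf_lb (fun k => R k l ⇒ x k) k).
      * rewrite !imp_curry, mcomm. apply lrefl.
    + apply res1. apply iinf_glb. intros k. apply res1. rewrite swap3.
      apply res2, res2. apply (iinf_lb (fun k => R k l ⇒ (d ⇒ x k))).
Qed.

Lemma phiR_rhoR_galois {K L} (R : K -> L -> A) : galois A (phiR A R) (rhoR A R).
Proof.
  split; [|split].
  - intros x1 x2 H l. unfold phiR. apply iinf_glb. intros k.
    eapply ltr. apply (iinf_lb _ k). apply imp_mono_r, H.
  - intros y1 y2 H k. unfold rhoR. apply isup_lub. intros l.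
    eapply ltr. apply mul_mono_r, H. apply (isup_ub (fun l => R k l ⊗ y2 l)).
  - intros x y. split.
    + intros H k. unfold rhoR. apply isup_lub. intros l. rewrite mcomm. apply res2.
      eapply ltr. apply H. unfold phiR. apply (iinf_lb (fun k => R k l ⇒ x k)).
    + intros H l. unfold phiR. apply iinf_glb. intros k. apply res1. rewrite mcomm.
      eapply ltr. 2: apply H. unfold rhoR. apply (isup_ub (fun l => R k l ⊗ y l)).
Qed.

Lemma delta_rep {K L} (delta : (K -> A) -> (L -> A)) :
  delta_type A delta -> feq A delta (deltaR A (fun k l => delta (ev k) l)).
Proof.
  intros [Hs Hd] x l.
  transitivity (delta (fsup A (fun z => exists k, z = fmul A (cst A K (x k)) (ev k))) l).
  { rewrite <- decomp. reflexivity. }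
  rewrite Hs. unfold finf, deltaR, iinf. apply le_antisym.
  - apply inf_glb. intros a [k ->].
    apply inf_lb. eexists. split.
    + eexists. split. exists k. reflexivity. reflexivity.
    + rewrite <- Hd. reflexivity.
  - apply inf_glb. intros a [w [[z [[k ->] ->]] ->]].
    rewrite <- Hd. unfold fimp, cst. apply inf_lb. now exists k.
Qed.

Lemma deltaR_type {K L} (R : K -> L -> A) : delta_type A (deltaR A R).
Proof.
  split.
  - intros M. extensionality l. unfold finf. apply le_antisym.
    + apply inf_glb. intros a [w [[x [Mx ->]] ->]].
      unfold deltaR. apply iinf_glb. intros k.
      eapply ltr. apply (iinf_lb _ k). apply imp_anti_l.
      unfold fsup. apply sup_ub. now exists x.
    + unfold deltaR at 1. apply iinf_glb. intros k. apply res1. rewrite mcomm.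
      apply res2. unfold fsup. apply sup_lub.
      intros a [x [Mx ->]]. apply res1. rewrite mcomm. apply res2.
      eapply ltr.
      * apply inf_lb. exists (deltaR A R x). split; [now exists x | reflexivity].
      * unfold deltaR. apply (iinf_lb (fun k => x k ⇒ R k l)).
  - intros d x. extensionality l. unfold fimp, fmul, cst, deltaR. apply le_antisym.
    + apply iinf_glb. intros k. rewrite <- imp_curry. apply imp_mono_r.
      apply (iinf_lb (fun k => x k ⇒ R k l)).
    + apply res1. apply iinf_glb. intros k. apply res1. rewrite <- massoc.
      apply res2. apply (iinf_lb (fun k => (d ⊗ x k) ⇒ R k l)).
Qed.

Lemma deltaR_anti {K L} (R : K -> L -> A) :
  forall x1 x2, fle A x1 x2 -> fle A (deltaR A R x2) (deltaR A R x1).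
Proof.
  intros x1 x2 H l. unfold deltaR. apply iinf_glb. intros k.
  eapply ltr. apply (iinf_lb _ k). apply imp_anti_l, H.
Qed.

Lemma deltaR_epsR_rgalois {K L} (R : K -> L -> A) : rgalois A (deltaR A R) (epsR A R).
Proof.
  split; [|split].
  - apply deltaR_anti.
  - exact (deltaR_anti (fun l k => R k l)).
  - intros x y. split.
    + intros H k. unfold epsR. apply iinf_glb. intros l. apply res1. rewrite mcomm.
      apply res2. eapply ltr. apply H. unfold deltaR.
      apply (iinf_lb (fun k => x k ⇒ R k l)).
    + intros H l. unfold deltaR. apply iinf_glb. intros k. apply res1. rewrite mcomm.
      apply res2. eapply ltr. apply H. unfold epsR.
      apply (iinf_lb (fun l => y l ⇒ R k l)).
Qed.


Lemma rg_same {K L} (delta : (K -> A) -> (L -> A)) (eps : (L -> A) -> (K -> A)) :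
  delta_type A delta -> delta_type A eps -> rgalois A delta eps ->
  forall k l, delta (ev k) l = eps (ev l) k.
Proof.
  intros [_ Hd1] [_ Hd2] [_ [_ G]] k l. apply le_antisym.
  - set (d := delta (ev k) l).
    assert (H1 : fle A (fmul A (cst A L d) (ev l)) (delta (ev k))).
    { intros l'. unfold fmul, cst. apply ev_mul_le. intros ->. apply lrefl. }
    apply G in H1. rewrite <- Hd2 in H1. specialize (H1 k). unfold fimp, cst in H1.
    apply imp_one. eapply ltr. apply (ev_self k). exact H1.
  - set (d := eps (ev l) k).
    assert (H1 : fle A (fmul A (cst A K d) (ev k)) (eps (ev l))).
    { intros k'. unfold fmul, cst. apply ev_mul_le. intros ->. apply lrefl. }
    apply G in H1. rewrite <- Hd1 in H1. specialize (H1 l). unfold fimp, cst in H1.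
    apply imp_one. eapply ltr. apply (ev_self l). exact H1.
Qed.

End S.

Theorem theorem3 (A : CRL) (I J : Type) :
  (* (i) *)
  ((forall phi : (I -> A) -> (J -> A),
      phi_type A phi <-> exists R : I -> J -> A, feq A phi (phiR A R)) /\
   (forall rho : (J -> A) -> (I -> A),
      rho_type A rho <-> exists R : I -> J -> A, feq A rho (rhoR A R)) /\
   (forall (phi : (I -> A) -> (J -> A)) (rho : (J -> A) -> (I -> A)),
      phi_type A phi -> rho_type A rho ->
      (galois A phi rho <->
       exists R : I -> J -> A, feq A phi (phiR A R) /\ feq A rho (rhoR A R)))) /\
  (* (ii) *)
  ((forall delta : (I -> A) -> (J -> A),
      delta_type A delta <-> exists R : I -> J -> A, feq A delta (deltaR A R)) /\
   (forall eps : (J -> A) -> (I -> A),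
      delta_type A eps <-> exists R : I -> J -> A, feq A eps (epsR A R)) /\
   (forall (delta : (I -> A) -> (J -> A)) (eps : (J -> A) -> (I -> A)),
      delta_type A delta -> delta_type A eps ->
      (rgalois A delta eps <->
       exists R : I -> J -> A, feq A delta (deltaR A R) /\ feq A eps (epsR A R)))).
Proof.
  split; [split; [|split] | split; [|split]].
  - intros phi. split.
    + apply phi_type_rep.
    + intros [R H]. apply feq_eq in H. subst. apply phiR_type.
  - intros rho. split.
    + intros H. eexists. apply (rho_rep A rho H).
    + intros [R H]. apply feq_eq in H. subst. apply rhoR_type.
  - intros phi rho Hp Hr. split.
    + intros [_ [_ G]]. exists (fun k l => rho (ev A l) k). split.
      * apply phi_rep; [exact G | apply Hp].
      * apply rho_rep, Hr.
    + intros [R [H1 H2]]. apply feq_eq in H1, H2. subst. apply phiR_rhoR_galois.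
  - intros delta. split.
    + intros H. eexists. apply (delta_rep A delta H).
    + intros [R H]. apply feq_eq in H. subst. apply deltaR_type.
  - intros eps. split.
    + intros H. exists (fun i j => eps (ev A j) i). exact (delta_rep A eps H).
    + intros [R H]. apply feq_eq in H. subst. exact (deltaR_type A (fun j i => R i j)).
  - intros delta eps Hd He. split.
    + intros G. exists (fun k l => delta (ev A k) l). split.
      * apply delta_rep, Hd.
      * intros y i. rewrite (delta_rep A eps He y i). unfold deltaR, epsR.
        assert (E : forall j, eps (ev A j) i = delta (ev A i) j)
          by (intros j; symmetry; apply (rg_same A delta eps Hd He G)).
        replace (fun j => imp (y j) (eps (ev A j) i))
          with (fun j => imp (y j) (delta (ev A i) j)); [reflexivity|].
        extensionality j. rewrite E. reflexivity.
    + intros [R [H1 H2]]. apply feq_eq in H1, H2. subst. apply deltaR_epsR_rgalois.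
Qed.
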